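(* Let $S:\mathbb{R}^n\to\mathbb{R}^n$ be nonexpansive (i.e. $\|Su-Sv\|\le\|u-v\|$ for all $u,v$) and suppose $S$ has a fixed point $w^\star$, i.e. $Sw^\star=w^\star$. Let $w^1\in\mathbb{R}^n$ and define the sequence $\{w^k\}$ by $w^{k+1}=\tfrac12 w^k+\tfrac12 Sw^k$ for $k\ge 1$. Then for every integer $N\ge 1$, $$\left\|\tfrac12 Sw^N-\tfrac12 w^N\right\|^2\le \frac{(N-1)^{N-1}}{N^N}\,\|w^1-w^\star\|^2,$$ with the convention $0^0=1$. *)

(* Defs.v *)
From mathcomp Require Import all_boot all_order all_algebra.
Set Implicit Arguments. Unset Strict Implicit. Unset Printing Implicit Defensive.
Import Order.TTheory GRing.Theory Num.Theory.
Local Open Scope ring_scope.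

Definition enorm (R : rcfType) (n : nat) (x : 'rV[R]_n) : R :=
  Num.sqrt (\sum_(i < n) x 0 i ^+ 2).

Definition nonexpansive (R : rcfType) (n : nat) (S : 'rV[R]_n -> 'rV[R]_n) : Prop :=
  forall u v, enorm (S u - S v) <= enorm (u - v).

(* Main.v *)
Require Import Defs.
From mathcomp Require Import all_boot all_order all_algebra.
From mathcomp Require Import ring lra.
Import Order.TTheory GRing.Theory Num.Theory.
Local Open Scope ring_scope.

Section Aux.
Variable R : rcfType.
Variable n : nat.

Definition dot (u v : 'rV[R]_n) : R := \sum_(i < n) u 0 i * v 0 i.

Lemma dot_ge0 u : 0 <= dot u u.
Proof. by apply: sumr_ge0 => i _; rewrite -expr2 sqr_ge0. Qed.

Lemma enorm_sq u : enorm u ^+ 2 = dot u u.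
Proof. by rewrite /enorm sqr_sqrtr // dot_ge0. Qed.

Lemma enorm_le u v : enorm u <= enorm v -> dot u u <= dot v v.
Proof. by rewrite /enorm ler_sqrt // dot_ge0. Qed.

Lemma dotC u v : dot u v = dot v u.
Proof. by apply: eq_bigr => i _; rewrite mulrC. Qed.

Lemma expand3 (a b c : 'rV[R]_n) (p q r : R) :
  dot (p *: a + q *: b + r *: c) (p *: a + q *: b + r *: c) =
  p^+2 * dot a a + q^+2 * dot b b + r^+2 * dot c c + 2 * p * q * dot a b
  + 2 * p * r * dot a c + 2 * q * r * dot b c.
Proof.
rewrite /dot !mulr_sumr -!big_split /=; apply: eq_bigr => i _; rewrite !mxE; ring.
Qed.

End Aux.
Arguments dot {R n}.
Arguments dot_ge0 {R n}.
Arguments enorm_sq {R n}.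
Arguments enorm_le {R n}.
Arguments expand3 {R n}.

Definition Phi {R : rcfType} (s k paa pab pbb : R) : R :=
  k * paa - 2 * k * (2 - s) * pab + (4 * k - (3 * k - 1) * s) * pbb.

Lemma step_scalar (R : rcfType) (s t k paa pab pac pbb pbc pcc : R) :
  t * s = 1 -> 0 <= t -> 0 <= s -> 0 <= k -> 0 <= k + 2 - (k + 1) * s ->
  4 * pcc - 4 * pbc <= 0 ->
  9 * pbb + paa + 4 * pcc - 6 * pab - 12 * pbc + 4 * pac
     <= paa - 2 * pab + pbb ->
  0 <= paa + 4 * pbb + s ^+ 2 * pcc - 4 * pab + 2 * s * pac - 4 * s * pbc ->
  Phi s (k + 1) pbb pbc pcc <= t * Phi s k paa pab pbb.
Proof.
move=> ts t0 s0 k0 c0 HA HB HW.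
have E : Phi s k paa pab pbb - s * Phi s (k + 1) pbb pbc pcc =
  2 * s * (k + 2 - (k + 1) * s) * (pbc - pcc)
  + 2 * k * s * (pab - pac - 2 * pbb + 3 * pbc - pcc)
  + k * (paa + 4 * pbb + s ^+ 2 * pcc - 4 * pab + 2 * s * pac - 4 * s * pbc).
  by rewrite /Phi; ring.
have H : 0 <= Phi s k paa pab pbb - s * Phi s (k + 1) pbb pbc pcc.
  rewrite E; apply: addr_ge0; [apply: addr_ge0|].
  - apply: mulr_ge0; [apply: mulr_ge0 => //; lra | lra].
  - apply: mulr_ge0; [apply: mulr_ge0 => //; lra | lra].
  - by apply: mulr_ge0.
have -> : Phi s (k + 1) pbb pbc pcc = t * (s * Phi s (k + 1) pbb pbc pcc).
  by rewrite mulrA ts mul1r.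
apply: ler_wpM2l => //; lra.
Qed.

Lemma base_scalar (R : rcfType) (s p11 p12 p22 : R) :
  0 <= 2 - s -> 4 * p22 - 4 * p12 <= 0 -> Phi s 1 p11 p12 p22 <= p11.
Proof.
move=> s2 HA.
have -> : Phi s 1 p11 p12 p22 = p11 - 2 * (2 - s) * (p12 - p22) by rewrite /Phi; ring.
have : 0 <= 2 * (2 - s) * (p12 - p22) by apply: mulr_ge0; [apply: mulr_ge0 => //; lra|lra].
lra.
Qed.

Lemma final_scalar (R : rcfType) (m paa pab pac pbb pbc pcc : R) :
  1 <= m ->
  4 * pcc - 4 * pbc <= 0 ->
  9 * pbb + paa + 4 * pcc - 6 * pab - 12 * pbc + 4 * pac
     <= paa - 2 * pab + pbb ->
  0 <= paa + 4 * pbb + ((m + 1) / m) ^+ 2 * pcc - 4 * pab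
       + 2 * ((m + 1) / m) * pac - 4 * ((m + 1) / m) * pbc ->
  pbb - 2 * pbc + pcc <= (m / (m + 1)) / (m + 1) * Phi ((m + 1) / m) m paa pab pbb.
Proof.
move=> m1 HA HB HW.
have m0 : m != 0 by apply/eqP => e; move: m1; rewrite e; lra.
have m10 : m + 1 != 0 by apply/eqP => e; move: m1; lra.
have E : (m / (m + 1)) / (m + 1) * Phi ((m + 1) / m) m paa pab pbb
   - (pbb - 2 * pbc + pcc) =
   2 / (m + 1) * (pbc - pcc)
   + 2 * (m / (m + 1)) * (pab - pac - 2 * pbb + 3 * pbc - pcc)
   + (m / (m + 1)) ^+ 2 * (paa + 4 * pbb + ((m + 1) / m) ^+ 2 * pcc - 4 * pab
       + 2 * ((m + 1) / m) * pac - 4 * ((m + 1) / m) * pbc).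
  by rewrite /Phi; field; rewrite m0 m10.
have mp : 0 <= m by lra.
have m1p : 0 <= m + 1 by lra.
have : 0 <= 2 / (m + 1) * (pbc - pcc)
   + 2 * (m / (m + 1)) * (pab - pac - 2 * pbb + 3 * pbc - pcc)
   + (m / (m + 1)) ^+ 2 * (paa + 4 * pbb + ((m + 1) / m) ^+ 2 * pcc - 4 * pab
       + 2 * ((m + 1) / m) * pac - 4 * ((m + 1) / m) * pbc).
  apply: addr_ge0; [apply: addr_ge0|].
  - apply: mulr_ge0; [apply: divr_ge0 => //; lra | lra].
  - apply: mulr_ge0; [apply: mulr_ge0; [lra|exact: divr_ge0] | lra].
  - by apply: mulr_ge0 => //; rewrite sqr_ge0.
rewrite -E; lra.
Qed.

Lemma one_scalar (R : rcfType) (p11 p12 p22 : R) :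
  0 <= p22 -> 4 * p22 - 4 * p12 <= 0 -> p11 - 2 * p12 + p22 <= p11.
Proof. move=> *; lra. Qed.

Theorem theorem1 (R : rcfType) (n : nat) (S : 'rV[R]_n -> 'rV[R]_n)
  (wstar : 'rV[R]_n) (w : nat -> 'rV[R]_n) :
  nonexpansive S ->
  S wstar = wstar ->
  (forall k, (1 <= k)%N -> w k.+1 = 2^-1 *: w k + 2^-1 *: S (w k)) ->
  forall N : nat, (1 <= N)%N ->
    enorm (2^-1 *: S (w N) - 2^-1 *: w N) ^+ 2
      <= ((N.-1 ^ N.-1)%N%:R / (N ^ N)%N%:R) * enorm (w 1%N - wstar) ^+ 2.
Proof.
move=> ne Sst hw N N1.
set x := fun k => w k - wstar.
have two0 : (2:R) != 0 by rewrite pnatr_eq0.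
have HA : forall k, (1 <= k)%N ->
   4 * dot (x k.+1) (x k.+1) - 4 * dot (x k) (x k.+1) <= 0.
  move=> k k1.
  have e1 : S (w k) - S wstar = (-1) *: x k + 2 *: x k.+1 + 0 *: x k.+2.
    by apply/rowP => j; rewrite Sst /x (hw k k1) !mxE; field.
  have e2 : w k - wstar = 1 *: x k + 0 *: x k.+1 + 0 *: x k.+2.
    by apply/rowP => j; rewrite /x !mxE; ring.
  have := enorm_le _ _ (ne (w k) wstar); rewrite e1 e2 !expand3 => H.
  lra.
have HB : forall k, (1 <= k)%N ->
   9 * dot (x k.+1) (x k.+1) + dot (x k) (x k) + 4 * dot (x k.+2) (x k.+2)
   - 6 * dot (x k) (x k.+1) - 12 * dot (x k.+1) (x k.+2) + 4 * dot (x k) (x k.+2)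
     <= dot (x k) (x k) - 2 * dot (x k) (x k.+1) + dot (x k.+1) (x k.+1).
  move=> k k1.
  have e1 : S (w k) - S (w k.+1) = (-1) *: x k + 3 *: x k.+1 + (-2) *: x k.+2.
    by apply/rowP => j; rewrite /x (hw k.+1 (leqW k1)) (hw k k1) !mxE; field.
  have e2 : w k - w k.+1 = 1 *: x k + (-1) *: x k.+1 + 0 *: x k.+2.
    by apply/rowP => j; rewrite /x !mxE; ring.
  have := enorm_le _ _ (ne (w k) (w k.+1)); rewrite e1 e2 !expand3 => H.
  lra.
have HW : forall k (s : R), 0 <=
   dot (x k) (x k) + 4 * dot (x k.+1) (x k.+1) + s ^+ 2 * dot (x k.+2) (x k.+2)
   - 4 * dot (x k) (x k.+1) + 2 * s * dot (x k) (x k.+2)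
   - 4 * s * dot (x k.+1) (x k.+2).
  move=> k s; have := dot_ge0 (1 *: x k + (-2) *: x k.+1 + s *: x k.+2).
  rewrite expand3 => H; lra.
have eg : 2^-1 *: S (w N) - 2^-1 *: w N = (-1) *: x N + 1 *: x N.+1 + 0 *: x N.+2.
  by apply/rowP => j; rewrite /x (hw N N1) !mxE; field.
rewrite eg !enorm_sq expand3 -/(x 1%N).
case: N N1 {eg} => [//|N'] _; case: N' => [|k].
  have -> : ((1.-1 ^ 1.-1)%N%:R / (1 ^ 1)%N%:R : R) = 1 by rewrite /= expn0 expn1 divr1.
  have := HA 1%N isT; have := dot_ge0 (x 2%N); lra.
rewrite /= !natrX -[(k.+2)%:R]natr1.
set m : R := (k.+1)%:R.
have m1 : 1 <= m by rewrite /m ler1n.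
have Hm : forall j, (j.+2 <= k.+1)%N -> (j.+2)%:R <= m by move=> j hj; rewrite /m ler_nat.
have mE : (k.+1)%:R = m by [].
clearbody m.
have m0 : m != 0 by apply/eqP => e; move: m1; rewrite e; lra.
have m10 : m + 1 != 0 by apply/eqP => e; move: m1; lra.
set s := (m + 1) / m.
set t := m / (m + 1).
have ts : t * s = 1 by rewrite /t /s; field; rewrite m0 m10.
have t0 : 0 <= t by apply: divr_ge0; lra.
have s0 : 0 <= s by apply: divr_ge0; lra.
have IH : forall j, (j <= k)%N ->
  Phi s (j.+1)%:R (dot (x j.+1) (x j.+1)) (dot (x j.+1) (x j.+2)) (dot (x j.+2) (x j.+2))
    <= t ^+ j * dot (x 1%N) (x 1%N).
  elim => [_|j IHj jk].
    rewrite expr0 mul1r; apply: base_scalar; last exact: HA.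
    have -> : 2 - s = (m - 1) / m by rewrite /s; field.
    apply: divr_ge0; lra.
  have jk' : (j <= k)%N by apply: ltnW.
  have := IHj jk' => H.
  apply: le_trans (_ : t * Phi s (j.+1)%:R (dot (x j.+1) (x j.+1)) (dot (x j.+1) (x j.+2)) (dot (x j.+2) (x j.+2)) <= _).
    rewrite -[(j.+2)%:R]natr1; apply: step_scalar => //.
    - have jk2 : ((j.+2)%:R : R) <= m by apply: Hm.
      have -> : (j.+1)%:R + 2 - ((j.+1)%:R + 1) * s = (m - (j.+2)%:R) / m.
        by rewrite /s -!natr1; field.
      apply: divr_ge0; lra.
    - exact: (HA j.+2 isT).
    - exact: (HB j.+1 isT).
  rewrite exprS -mulrA; apply: ler_wpM2l; [exact: t0 | exact: H].
have Hk := IH k (leqnn k); rewrite mE in Hk.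
have Hf := final_scalar _ _ _ _ _ _ _ _ m1 (HA k.+2 isT) (HB k.+1 isT) (HW k.+1 s).
have c0 : 0 <= (m / (m + 1)) / (m + 1) by apply: divr_ge0 => //; lra.
have Hk2 := ler_wpM2l c0 Hk.
have -> : m ^+ k.+1 / (m + 1) ^+ k.+2 = (m / (m + 1)) / (m + 1) * t ^+ k.
  rewrite /t expr_div_n !exprS; field.
  by rewrite m10 expf_neq0.
rewrite mulrA in Hk2.
apply: le_trans Hk2.
move: Hf; rewrite /s; lra.
Qed.
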